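(* Let $p=(p_{ijk})_{i,j,k\in\{0,1\}}\in\Delta_7$ be strictly positive (all eight entries $>0$). Then $p\in\operatorname{RBM}_{3,2}$ if and only if $p$ lies in the union of the following six sets: $$\{p_{000}p_{011}\ge p_{001}p_{010},\ p_{100}p_{111}\ge p_{101}p_{110}\},\qquad \{p_{000}p_{011}\le p_{001}p_{010},\ p_{100}p_{111}\le p_{101}p_{110}\},$$ $$\{p_{000}p_{101}\ge p_{001}p_{100},\ p_{010}p_{111}\ge p_{011}p_{110}\},\qquad \{p_{000}p_{101}\le p_{001}p_{100},\ p_{010}p_{111}\le p_{011}p_{110}\},$$ $$\{p_{000}p_{110}\ge p_{100}p_{010},\ p_{001}p_{111}\ge p_{101}p_{011}\},\qquad \{p_{000}p_{110}\le p_{100}p_{010},\ p_{001}p_{111}\le p_{101}p_{011}\}.$$ Equivalently, with the determinants $d_{i,j}$ defined in the context, $p\in\operatorname{RBM}_{3,2}$ iff there is $i\in\{1,2,3\}$ with $d_{i,0}(p)\,d_{i,1}(p)\ge 0$.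
   Context: A distribution of three binary random variables is a $2\times2\times2$ tensor $p=(p_{ijk})_{i,j,k\in\{0,1\}}$ with nonnegative entries summing to $1$; the set of these is the simplex $\Delta_7$. For nonnegative vectors $a,b,c\in\mathbb{R}^2_{\ge0}$, $a\otimes b\otimes c$ is the tensor with entries $a_ib_jc_k$. The model $\operatorname{RBM}_{3,2}$ is the set of $p\in\Delta_7$ of the form $p=(a_1\otimes b_1\otimes c_1+d_1\otimes e_1\otimes f_1)*(a_2\otimes b_2\otimes c_2+d_2\otimes e_2\otimes f_2)$ with all vectors in $\mathbb{R}^2_{\ge0}$, where $*$ is the entrywise (Hadamard) product. The determinants of the six $2\times2$ slices are $d_{1,0}=p_{000}p_{011}-p_{001}p_{010}$, $d_{1,1}=p_{100}p_{111}-p_{101}p_{110}$, $d_{2,0}=p_{000}p_{101}-p_{001}p_{100}$, $d_{2,1}=p_{010}p_{111}-p_{011}p_{110}$, $d_{3,0}=p_{000}p_{110}-p_{010}p_{100}$, $d_{3,1}=p_{001}p_{111}-p_{011}p_{101}$. *)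

(* Defs.v *)
(* classical real numbers. Index 0 is [false], index 1 is [true]. *)
From Stdlib Require Import Reals Lra.
Open Scope R_scope.

Definition tensor := bool -> bool -> bool -> R.

Definition in_simplex (p : tensor) : Prop :=
  (forall i j k, 0 <= p i j k) /\
  p false false false + p false false true + p false true false + p false true true
  + p true false false + p true false true + p true true false + p true true true = 1.

Definition nonneg2 (a : bool -> R) : Prop := 0 <= a false /\ 0 <= a true.

Definition outer3 (a b c : bool -> R) : tensor := fun i j k => a i * b j * c k.

Definition RBM32 (p : tensor) : Prop :=
  in_simplex p /\
  exists a1 b1 c1 d1 e1 f1 a2 b2 c2 d2 e2 f2 : bool -> R,
    nonneg2 a1 /\ nonneg2 b1 /\ nonneg2 c1 /\ nonneg2 d1 /\ nonneg2 e1 /\ nonneg2 f1 /\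
    nonneg2 a2 /\ nonneg2 b2 /\ nonneg2 c2 /\ nonneg2 d2 /\ nonneg2 e2 /\ nonneg2 f2 /\
    forall i j k,
      p i j k = (outer3 a1 b1 c1 i j k + outer3 d1 e1 f1 i j k)
                * (outer3 a2 b2 c2 i j k + outer3 d2 e2 f2 i j k).

(* Main.v *)
Require Import Defs.
From Stdlib Require Import Reals Lra Psatz Classical.
Open Scope R_scope.

Definition v2 (x y : R) : bool -> R := fun b => if b then y else x.

Lemma nn_div a b : 0 <= a -> 0 < b -> 0 <= a / b.
Proof. intros; unfold Rdiv; apply Rmult_le_pos; [lra| left; apply Rinv_0_lt_compat; lra]. Qed.

Lemma nn2_v2 x y : 0 <= x -> 0 <= y -> nonneg2 (v2 x y).
Proof. intros; split; simpl; assumption. Qed.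

Lemma nn2_get a i : nonneg2 a -> 0 <= a i.
Proof. intros [H0 H1]; destruct i; assumption. Qed.

Lemma Q_nonneg a b c d e f i j k : nonneg2 a -> nonneg2 b -> nonneg2 c ->
  nonneg2 d -> nonneg2 e -> nonneg2 f ->
  0 <= outer3 a b c i j k + outer3 d e f i j k.
Proof.
  intros Ha Hb Hc Hd He Hf; unfold outer3.
  apply Rplus_le_le_0_compat; repeat apply Rmult_le_pos; apply nn2_get; assumption.
Qed.

Lemma slice_le q0 q1 q2 q3 r0 r1 r2 r3 :
  0 <= q0 -> 0 <= q1 -> 0 <= q2 -> 0 <= q3 -> 0 <= r0 -> 0 <= r1 -> 0 <= r2 -> 0 <= r3 ->
  q0*q3 - q1*q2 <= 0 -> r0*r3 - r1*r2 <= 0 ->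
  (q0*r0)*(q3*r3) - (q1*r1)*(q2*r2) <= 0.
Proof.
  intros.
  assert ((q0*q3)*(r0*r3) <= (q1*q2)*(r1*r2)).
  { apply Rmult_le_compat; try apply Rmult_le_pos; lra. }
  replace ((q0*r0)*(q3*r3)) with ((q0*q3)*(r0*r3)) by ring.
  replace ((q1*r1)*(q2*r2)) with ((q1*q2)*(r1*r2)) by ring. lra.
Qed.

Lemma slice_ge q0 q1 q2 q3 r0 r1 r2 r3 :
  0 <= q0 -> 0 <= q1 -> 0 <= q2 -> 0 <= q3 -> 0 <= r0 -> 0 <= r1 -> 0 <= r2 -> 0 <= r3 ->
  0 <= q0*q3 - q1*q2 -> 0 <= r0*r3 - r1*r2 ->
  0 <= (q0*r0)*(q3*r3) - (q1*r1)*(q2*r2).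
Proof.
  intros.
  assert ((q1*q2)*(r1*r2) <= (q0*q3)*(r0*r3)).
  { apply Rmult_le_compat; try apply Rmult_le_pos; lra. }
  replace ((q0*r0)*(q3*r3)) with ((q0*q3)*(r0*r3)) by ring.
  replace ((q1*r1)*(q2*r2)) with ((q1*q2)*(r1*r2)) by ring. lra.
Qed.

Lemma axis_lemma q0 q1 q2 q3 s0 s1 s2 s3 r0 r1 r2 r3 t0 t1 t2 t3 u0 u1 v0 v1 X Y :
  0 <= q0 -> 0 <= q1 -> 0 <= q2 -> 0 <= q3 -> 0 <= s0 -> 0 <= s1 -> 0 <= s2 -> 0 <= s3 ->
  0 <= r0 -> 0 <= r1 -> 0 <= r2 -> 0 <= r3 -> 0 <= t0 -> 0 <= t1 -> 0 <= t2 -> 0 <= t3 ->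
  0 <= u0 -> 0 <= u1 -> 0 <= v0 -> 0 <= v1 ->
  q0*q3 - q1*q2 = u0*X -> s0*s3 - s1*s2 = u1*X ->
  r0*r3 - r1*r2 = v0*Y -> t0*t3 - t1*t2 = v1*Y ->
  ((q0*r0)*(q3*r3) - (q1*r1)*(q2*r2)) * ((s0*t0)*(s3*t3) - (s1*t1)*(s2*t2)) < 0 ->
  X*Y < 0.
Proof.
  intros. set (P0 := (q0*r0)*(q3*r3) - (q1*r1)*(q2*r2)) in *.
  set (P1 := (s0*t0)*(s3*t3) - (s1*t1)*(s2*t2)) in *.
  destruct (Rle_dec 0 X) as [HX|HX]; destruct (Rle_dec 0 Y) as [HY|HY].
  - exfalso.
    assert (0 <= P0) by (apply slice_ge; auto; nra).
    assert (0 <= P1) by (apply slice_ge; auto; nra). nra.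
  - destruct (Req_dec X 0) as [E|E].
    + exfalso. subst X.
      assert (P0 <= 0) by (apply slice_le; auto; nra).
      assert (P1 <= 0) by (apply slice_le; auto; nra). nra.
    + nra.
  - destruct (Req_dec Y 0) as [E|E].
    + exfalso. subst Y.
      assert (P0 <= 0) by (apply slice_le; auto; nra).
      assert (P1 <= 0) by (apply slice_le; auto; nra). nra.
    + nra.
  - exfalso.
    assert (P0 <= 0) by (apply slice_le; auto; nra).
    assert (P1 <= 0) by (apply slice_le; auto; nra). nra.
Qed.

Lemma parity ea eb ec fa fb fc :
  (eb*ec)*(fb*fc) < 0 -> (ea*ec)*(fa*fc) < 0 -> (ea*eb)*(fa*fb) < 0 -> False.
Proof.
  intros HA HB HC.
  set (A := (eb*ec)*(fb*fc)) in *. set (B := (ea*ec)*(fa*fc)) in *.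
  set (C := (ea*eb)*(fa*fb)) in *.
  assert (HAB : 0 < A*B) by nra.
  assert (A*B*C < 0) by nra.
  assert (A*B*C = (ea*eb*ec*fa*fb*fc)*(ea*eb*ec*fa*fb*fc)) by (unfold A, B, C; ring).
  assert (0 <= (ea*eb*ec*fa*fb*fc)*(ea*eb*ec*fa*fb*fc)) by apply Rle_0_sqr.
  lra.
Qed.

Lemma opp_sign x y z w : ~ (x >= y /\ z >= w) -> ~ (x <= y /\ z <= w) -> (x - y) * (z - w) < 0.
Proof.
  intros H1 H2.
  destruct (Rle_dec y x); destruct (Rle_dec w z).
  - exfalso; apply H1; split; lra.
  - destruct (Req_dec x y). { exfalso; apply H2; split; lra. } nra.
  - destruct (Req_dec z w). { exfalso; apply H2; split; lra. } nra.
  - exfalso; apply H2; split; lra.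
Qed.

Ltac nzs := repeat split; intro; nra.

Theorem theorem1 (p : tensor) :
  in_simplex p ->
  (forall i j k, 0 < p i j k) ->
  (RBM32 p <->
   (  (p false false false * p false true true >= p false false true * p false true false /\
       p true false false * p true true true >= p true false true * p true true false)
   \/ (p false false false * p false true true <= p false false true * p false true false /\
       p true false false * p true true true <= p true false true * p true true false)
   \/ (p false false false * p true false true >= p false false true * p true false false /\
       p false true false * p true true true >= p false true true * p true true false)
   \/ (p false false false * p true false true <= p false false true * p true false false /\
       p false true false * p true true true <= p false true true * p true true false)
   \/ (p false false false * p true true false >= p true false false * p false true false /\
       p false false true * p true true true >= p true false true * p false true true)
   \/ (p false false false * p true true false <= p true false false * p false true false /\
       p false false true * p true true true <= p true false true * p false true true))).
Proof.
  intros Hs Hpos.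
  pose proof (Hpos false false false) as H000. pose proof (Hpos false false true) as H001.
  pose proof (Hpos false true false) as H010. pose proof (Hpos false true true) as H011.
  pose proof (Hpos true false false) as H100. pose proof (Hpos true false true) as H101.
  pose proof (Hpos true true false) as H110. pose proof (Hpos true true true) as H111.
  split.
  - intros [_ [a1 [b1 [c1 [d1 [e1 [f1 [a2 [b2 [c2 [d2 [e2 [f2
      [Na1 [Nb1 [Nc1 [Nd1 [Ne1 [Nf1 [Na2 [Nb2 [Nc2 [Nd2 [Ne2 [Nf2 Hp]]]]]]]]]]]]]]]]]]]]]]]]].
    pose (Q := fun i j k => outer3 a1 b1 c1 i j k + outer3 d1 e1 f1 i j k).
    pose (S := fun i j k => outer3 a2 b2 c2 i j k + outer3 d2 e2 f2 i j k).
    assert (HQ : forall i j k, 0 <= Q i j k) by (intros; apply Q_nonneg; auto).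
    assert (HS : forall i j k, 0 <= S i j k) by (intros; apply Q_nonneg; auto).
    assert (Hp' : forall i j k, p i j k = Q i j k * S i j k) by exact Hp.
    clear Hp.
    pose proof (nn2_get a1 false Na1). pose proof (nn2_get a1 true Na1).
    pose proof (nn2_get b1 false Nb1). pose proof (nn2_get b1 true Nb1).
    pose proof (nn2_get c1 false Nc1). pose proof (nn2_get c1 true Nc1).
    pose proof (nn2_get d1 false Nd1). pose proof (nn2_get d1 true Nd1).
    pose proof (nn2_get e1 false Ne1). pose proof (nn2_get e1 true Ne1).
    pose proof (nn2_get f1 false Nf1). pose proof (nn2_get f1 true Nf1).
    pose proof (nn2_get a2 false Na2). pose proof (nn2_get a2 true Na2).
    pose proof (nn2_get b2 false Nb2). pose proof (nn2_get b2 true Nb2).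
    pose proof (nn2_get c2 false Nc2). pose proof (nn2_get c2 true Nc2).
    pose proof (nn2_get d2 false Nd2). pose proof (nn2_get d2 true Nd2).
    pose proof (nn2_get e2 false Ne2). pose proof (nn2_get e2 true Ne2).
    pose proof (nn2_get f2 false Nf2). pose proof (nn2_get f2 true Nf2).
    destruct (classic (
   (  (p false false false * p false true true >= p false false true * p false true false /\
       p true false false * p true true true >= p true false true * p true true false)
   \/ (p false false false * p false true true <= p false false true * p false true false /\
       p true false false * p true true true <= p true false true * p true true false)
   \/ (p false false false * p true false true >= p false false true * p true false false /\
       p false true false * p true true true >= p false true true * p true true false)
   \/ (p false false false * p true false true <= p false false true * p true false false /\
       p false true false * p true true true <= p false true true * p true true false)
   \/ (p false false false * p true true false >= p true false false * p false true false /\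
       p false false true * p true true true >= p true false true * p false true true)
   \/ (p false false false * p true true false <= p true false false * p false true false /\
       p false false true * p true true true <= p true false true * p false true true)))) as [D|ND];
      [exact D|exfalso].
    assert (A1 := opp_sign (p false false false * p false true true) (p false false true * p false true false)
       (p true false false * p true true true) (p true false true * p true true false)
       ltac:(tauto) ltac:(tauto)).
    assert (A2 := opp_sign (p false false false * p true false true) (p false false true * p true false false)
       (p false true false * p true true true) (p false true true * p true true false)
       ltac:(tauto) ltac:(tauto)).
    assert (A3 := opp_sign (p false false false * p true true false) (p true false false * p false true false)
       (p false false true * p true true true) (p true false true * p false true true)
       ltac:(tauto) ltac:(tauto)).
    rewrite !Hp' in A1, A2, A3.
    set (Ea := a1 false * d1 true - a1 true * d1 false).
    set (Eb := b1 false * e1 true - b1 true * e1 false).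
    set (Ec := c1 false * f1 true - c1 true * f1 false).
    set (Fa := a2 false * d2 true - a2 true * d2 false).
    set (Fb := b2 false * e2 true - b2 true * e2 false).
    set (Fc := c2 false * f2 true - c2 true * f2 false).
    assert (X1 : (Eb*Ec)*(Fb*Fc) < 0).
    { eapply (axis_lemma _ _ _ _ _ _ _ _ _ _ _ _ _ _ _ _
        (a1 false * d1 false) (a1 true * d1 true) (a2 false * d2 false) (a2 true * d2 true));
        [..| exact A1]; try apply HQ; try apply HS; try (apply Rmult_le_pos; assumption);
        unfold Q, S, outer3, Ea, Eb, Ec, Fa, Fb, Fc; ring. }
    assert (X2 : (Ea*Ec)*(Fa*Fc) < 0).
    { eapply (axis_lemma _ _ _ _ _ _ _ _ _ _ _ _ _ _ _ _
        (b1 false * e1 false) (b1 true * e1 true) (b2 false * e2 false) (b2 true * e2 true));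
        [..| exact A2]; try apply HQ; try apply HS; try (apply Rmult_le_pos; assumption);
        unfold Q, S, outer3, Ea, Eb, Ec, Fa, Fb, Fc; ring. }
    assert (X3 : (Ea*Eb)*(Fa*Fb) < 0).
    { eapply (axis_lemma _ _ _ _ _ _ _ _ _ _ _ _ _ _ _ _
        (c1 false * f1 false) (c1 true * f1 true) (c2 false * f2 false) (c2 true * f2 true));
        [..| exact A3]; try apply HQ; try apply HS; try (apply Rmult_le_pos; assumption);
        unfold Q, S, outer3, Ea, Eb, Ec, Fa, Fb, Fc; ring. }
    exact (parity Ea Eb Ec Fa Fb Fc X1 X2 X3).
  - intros Hd. split; [exact Hs|].
    destruct Hd as [HC|[HC|[HC|[HC|[HC|HC]]]]]; destruct HC as [HC1 HC2].
    + exists (v2 1 0), (v2 (p false false true) (p false true true)), (v2 ((p false true false)/(p false true true)) 1), (v2 0 1), (v2 (p true false true) (p true true true)), (v2 ((p true true false)/(p true true true)) 1), (v2 1 1), (v2 1 1), (v2 1 1), (v2 (((p false false false)*(p false true true) - (p false false true)*(p false true false))/((p false false true)*(p false true false))) (((p true false false)*(p true true true) - (p true false true)*(p true true false))/((p true false true)*(p true true false)))), (v2 1 0), (v2 1 0);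
      repeat split; try (simpl; lra);
      try (simpl; apply nn_div; [lra | first [assumption | apply Rmult_lt_0_compat; assumption]]);
      try (intros [|] [|] [|]; unfold outer3, v2; simpl; field; nzs).
    + exists (v2 1 0), (v2 (p false false false) (p false true false)), (v2 1 ((p false true true)/(p false true false))), (v2 0 1), (v2 (p true false false) (p true true false)), (v2 1 ((p true true true)/(p true true false))), (v2 1 1), (v2 1 1), (v2 1 1), (v2 (((p false false true)*(p false true false) - (p false false false)*(p false true true))/((p false false false)*(p false true true))) (((p true false true)*(p true true false) - (p true false false)*(p true true true))/((p true false false)*(p true true true)))), (v2 1 0), (v2 0 1);
      repeat split; try (simpl; lra);
      try (simpl; apply nn_div; [lra | first [assumption | apply Rmult_lt_0_compat; assumption]]);
      try (intros [|] [|] [|]; unfold outer3, v2; simpl; field; nzs).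
    + exists (v2 (p false false true) (p true false true)), (v2 1 0), (v2 ((p true false false)/(p true false true)) 1), (v2 (p false true true) (p true true true)), (v2 0 1), (v2 ((p true true false)/(p true true true)) 1), (v2 1 1), (v2 1 1), (v2 1 1), (v2 1 0), (v2 (((p false false false)*(p true false true) - (p false false true)*(p true false false))/((p false false true)*(p true false false))) (((p false true false)*(p true true true) - (p false true true)*(p true true false))/((p false true true)*(p true true false)))), (v2 1 0);
      repeat split; try (simpl; lra);
      try (simpl; apply nn_div; [lra | first [assumption | apply Rmult_lt_0_compat; assumption]]);
      try (intros [|] [|] [|]; unfold outer3, v2; simpl; field; nzs).
    + exists (v2 (p false false false) (p true false false)), (v2 1 0), (v2 1 ((p true false true)/(p true false false))), (v2 (p false true false) (p true true false)), (v2 0 1), (v2 1 ((p true true true)/(p true true false))), (v2 1 1), (v2 1 1), (v2 1 1), (v2 1 0), (v2 (((p false false true)*(p true false false) - (p false false false)*(p true false true))/((p false false false)*(p true false true))) (((p false true true)*(p true true false) - (p false true false)*(p true true true))/((p false true false)*(p true true true)))), (v2 0 1);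
      repeat split; try (simpl; lra);
      try (simpl; apply nn_div; [lra | first [assumption | apply Rmult_lt_0_compat; assumption]]);
      try (intros [|] [|] [|]; unfold outer3, v2; simpl; field; nzs).
    + exists (v2 (p false true false) (p true true false)), (v2 ((p true false false)/(p true true false)) 1), (v2 1 0), (v2 (p false true true) (p true true true)), (v2 ((p true false true)/(p true true true)) 1), (v2 0 1), (v2 1 1), (v2 1 1), (v2 1 1), (v2 1 0), (v2 1 0), (v2 (((p false false false)*(p true true false) - (p false true false)*(p true false false))/((p false true false)*(p true false false))) (((p false false true)*(p true true true) - (p false true true)*(p true false true))/((p false true true)*(p true false true))));
      repeat split; try (simpl; lra);
      try (simpl; apply nn_div; [lra | first [assumption | apply Rmult_lt_0_compat; assumption]]);
      try (intros [|] [|] [|]; unfold outer3, v2; simpl; field; nzs).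
    + exists (v2 (p false false false) (p true false false)), (v2 1 ((p true true false)/(p true false false))), (v2 1 0), (v2 (p false false true) (p true false true)), (v2 1 ((p true true true)/(p true false true))), (v2 0 1), (v2 1 1), (v2 1 1), (v2 1 1), (v2 1 0), (v2 0 1), (v2 (((p false true false)*(p true false false) - (p false false false)*(p true true false))/((p false false false)*(p true true false))) (((p false true true)*(p true false true) - (p false false true)*(p true true true))/((p false false true)*(p true true true))));
      repeat split; try (simpl; lra);
      try (simpl; apply nn_div; [lra | first [assumption | apply Rmult_lt_0_compat; assumption]]);
      try (intros [|] [|] [|]; unfold outer3, v2; simpl; field; nzs).
Qed.
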